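(* An orientation $O$ of an interval hypergraph $\mathcal{I}$ on $[n]$ is acyclic if and only if there are no $I,J\in\mathcal{I}$ with $O(I)\in J\setminus\{O(J)\}$ and $O(J)\in I\setminus\{O(I)\}$.
   Context: An interval hypergraph $\mathcal{I}$ on $[n]$ is a collection of intervals $[i,j]=\{i,\dots,j\}$ of $[n]$ containing all singletons. An orientation is a map $O:\mathcal{I}\to[n]$ with $O(I)\in I$ for all $I$; it is acyclic if there are no $H_1,\dots,H_k\in\mathcal{I}$, $k\ge2$, with $O(H_{i+1})\in H_i\setminus\{O(H_i)\}$ for $i\in[k-1]$ and $O(H_1)\in H_k\setminus\{O(H_k)\}$. *)

(* Defs.v *)
From mathcomp Require Import all_boot.
Set Implicit Arguments. Unset Strict Implicit. Unset Printing Implicit Defensive.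

(* The ground set [n] is represented by 'I_n (points 0..n-1, i.e. shifted by one).
   An interval [i,j] = {i,...,j} with i <= j is represented by the pair (i,j). *)
Definition interval (n : nat) := ('I_n * 'I_n)%type.

Definition in_int (n : nat) (I : interval n) (x : 'I_n) : bool :=
  (I.1 <= x) && (x <= I.2).

Definition interval_hypergraph (n : nat) (H : {set interval n}) : Prop :=
  (forall I, I \in H -> I.1 <= I.2) /\ (forall x : 'I_n, (x, x) \in H).

Definition orientation (n : nat) (H : {set interval n}) (O : interval n -> 'I_n) : Prop :=
  forall I, I \in H -> in_int I (O I).

Definition in_minus (n : nat) (O : interval n -> 'I_n) (I : interval n) (x : 'I_n) : bool :=
  in_int I x && (x != O I).

Definition is_cycle (n : nat) (H : {set interval n}) (O : interval n -> 'I_n)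
  (s : seq (interval n)) : Prop :=
  match s with
  | [::] => False
  | H1 :: _ =>
      2 <= size s /\ all (fun I => I \in H) s /\
      (forall i, i.+1 < size s -> in_minus O (nth H1 s i) (O (nth H1 s i.+1))) /\
      in_minus O (last H1 s) (O H1)
  end.

Definition acyclic (n : nat) (H : {set interval n}) (O : interval n -> 'I_n) : Prop :=
  ~ exists s : seq (interval n), is_cycle H O s.

(* Main.v *)
Require Import Defs.
From mathcomp Require Import all_boot.
From mathcomp Require Import zify.

Definition Rr (n : nat) (H : {set interval n}) (O : interval n -> 'I_n) (I J : interval n) : bool :=
  [&& I \in H, J \in H & in_minus O I (O J)].

Arguments Rr {n}.

Lemma seq_max (T : eqType) (f : T -> nat) (s : seq T) (x : T) :
  exists2 b, b \in x :: s & forall y, y \in x :: s -> f y <= f b.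
Proof.
elim: s x => [|z s IH] x.
  by exists x; rewrite ?inE // => y /[!inE] /eqP->.
have [b bs Hb] := IH z.
case: (leqP (f x) (f b)) => Hxb.
  exists b; first by rewrite inE bs orbT.
  by move=> y; rewrite inE => /orP [/eqP->|/Hb].
exists x; first by rewrite inE eqxx.
move=> y; rewrite inE => /orP [/eqP->//|/Hb]; lia.
Qed.

Lemma key (n : nat) (H : {set interval n}) (O : interval n -> 'I_n) :
  orientation H O -> forall k s, size s <= k -> 2 <= size s -> cycle (Rr H O) s ->
  exists I J, Rr H O I J && Rr H O J I.
Proof.
move=> Hor; elim=> [|k IH] s; first by case: s.
move=> Hk H2 Hc.
case: s Hk H2 Hc => [//|x0 s0] Hk H2 Hc.
have [b bs Hb] := @seq_max _ (fun I => nat_of_ord (O I)) s0 x0.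
set s := x0 :: s0 in Hk H2 Hc bs Hb *.
case: (rot_to bs) => i s' Hrot.
have cyc : cycle (Rr H O) (b :: s') by rewrite -Hrot rot_cycle.
have Hb' : forall y, y \in b :: s' -> O y <= O b by move=> y; rewrite -Hrot mem_rot; apply: Hb.
have Hsz : size (b :: s') = size s by rewrite -Hrot size_rot.
case: s' Hrot cyc Hb' Hsz => [|c t] Hrot cyc Hb' Hsz; first by rewrite -Hsz in H2.
rewrite /cycle /= rcons_path in cyc.
set a := last c t in cyc.
move/and3P: cyc => [Rbc Pct Rab].
move: (Rab) (Rbc) => /and3P [aH bH /andP [/andP [ab1 ab2] abne]] /and3P [_ cH /andP [/andP [bc1 bc2] bcne]].
have Ob := Hor b bH; have Oa := Hor a aH; rewrite /in_int in Ob Oa.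
have amem : a \in b :: c :: t by rewrite /a inE mem_last orbT.
have Hab := Hb' a amem.
have Hcb := Hb' c ltac:(by rewrite !inE eqxx orbT).
case: (leqP (O c) (O a)) => Hca.
  exists a, b; rewrite Rab /Rr aH bH /= /in_minus /in_int.
  by rewrite (leq_trans bc1 Hca) (leq_trans Hab (andP Ob).2) eq_sym abne.
have Rac : Rr H O a c.
  rewrite /Rr aH cH /= /in_minus /in_int.
  by rewrite (leq_trans (andP Oa).1 (ltnW Hca)) (leq_trans Hcb ab2) /=; apply/negP => /eqP E; move: Hca; rewrite E ltnn.
have tne : t != [::] by apply/eqP => E; move: Hca; rewrite /a E /= ltnn.
apply: (IH (c :: t)).
- by move: Hk; rewrite -Hsz /=.
- by case: t {a Hab Hca Pct Hsz amem Rac Rab Hb' Hrot Hcb aH Oa abne ab1 ab2} tne.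
- by rewrite /cycle rcons_path Pct.
Qed.

Theorem proposition3p6 (n : nat) (H : {set interval n}) (O : interval n -> 'I_n) :
  interval_hypergraph H -> orientation H O ->
  (acyclic H O <->
   ~ exists I J, [/\ I \in H, J \in H, in_minus O J (O I) & in_minus O I (O J)]).
Proof.
move=> _ Hor; split.
  move=> Hac [I [J [IH JH HJI HIJ]]]; apply: Hac.
  exists [:: I; J]; rewrite /is_cycle /= IH JH; split => //; split => //; split => //.
  by case=> [|[|i]] //= _.
move=> Hno [[|H1 t] //=] [H2 [Hall [Hnth Hlast]]].
have Hall' : all (fun I => I \in H) (H1 :: t) by [].
have Hc : cycle (Rr H O) (H1 :: t).
  rewrite /cycle rcons_path; apply/andP; split.
    apply/(pathP H1) => i Hi.
    have Hin : forall j, j < (size t).+1 -> nth H1 (H1 :: t) j \in H.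
      by move=> j Hj; apply: (allP Hall'); apply: mem_nth.
    rewrite /Rr Hin; last exact: ltnW.
    have := Hin i.+1 Hi; rewrite /= => ->; exact: (Hnth i Hi).
  rewrite /Rr Hlast andbT.
  by rewrite (allP Hall' _ (mem_head _ _)) (allP Hall' _ (mem_last _ _)).
have [I [J /andP [RIJ RJI]]] := @key _ _ _ Hor _ (H1 :: t) (leqnn _) H2 Hc.
apply: Hno; exists J, I.
move/and3P: RIJ => [? ? ?]; move/and3P: RJI => [? ? ?]; by split.
Qed.
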